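(* Let $\Delta x>0$ and define $g_\tau(x)=\dfrac{\tfrac12 x}{\sinh(\tfrac12 x)}$ for $x\neq0$, $g_\tau(0)=1$. Then the function $h(x)=g_\tau(\Delta x)\,e^x$ is the reconstruction pair of $\exp$, i.e. $e^x=\frac{1}{\Delta x}\int_{x-\frac12\Delta x}^{x+\frac12\Delta x}h(\zeta)\,d\zeta$ for all real $x$. Moreover $g_\tau$ is the generating function of the numbers $\tau_n$: setting $\tau_n:=\frac{1}{n!}g_\tau^{(n)}(0)$ for all $n\in\mathbb{N}_0$, one has $\tau_{2n+1}=0$ for all $n\in\mathbb{N}_0$, $\tau_0=1$, and $\tau_{2k}=\sum_{s=0}^{k-1}\frac{-\tau_{2s}}{2^{2k-2s}(2k-2s+1)!}$ for all $k>0$. *)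

(* Defs.v *)
From Stdlib Require Import Reals Factorial.
From Coquelicot Require Import Coquelicot.
Open Scope R_scope.

Definition g_tau (x : R) : R :=
  if Req_EM_T x 0 then 1 else (x / 2) / sinh (x / 2).

Definition h_exp (dx : R) (x : R) : R := g_tau dx * exp x.

Definition tau (n : nat) : R := Derive_n g_tau n 0 / INR (fact n).

(* Main.v *)
Require Import Defs.
From Stdlib Require Import Reals Factorial.
From Coquelicot Require Import Coquelicot.
From Stdlib Require Import Reals Factorial Lia Lra.
From Coquelicot Require Import Coquelicot.
Open Scope R_scope.

Definition ca (n : nat) : R := ((/2) ^ S n - (- /2) ^ S n) / INR (fact (S n)).
Fixpoint bf (n : nat) : nat -> R :=
  match n with
  | O => fun _ => 1
  | S m => fun i => if (i <=? m)%nat then bf m i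
                    else - sum_f_R0 (fun j => bf m j * ca (S m - j)) m
  end.
Definition cb (n : nat) : R := bf n n.

Lemma bf_stable n : forall i, (i <= n)%nat -> bf n i = cb i.
Proof.
  induction n as [|n IH]; intros i Hi.
  - replace i with 0%nat by lia. reflexivity.
  - destruct (Nat.eq_dec i (S n)) as [->|Hne]; [reflexivity|].
    simpl. replace (i <=? n)%nat with true by (symmetry; apply Nat.leb_le; lia).
    apply IH; lia.
Qed.

Lemma cb_S n : cb (S n) = - sum_f_R0 (fun j => cb j * ca (S n - j)) n.
Proof.
  unfold cb at 1; cbn [bf]. rewrite (proj2 (Nat.leb_gt (S n) n)) by lia.
  f_equal. apply sum_eq. intros j Hj. rewrite bf_stable by lia. reflexivity.
Qed.

Lemma cb_0 : cb 0 = 1. Proof. reflexivity. Qed.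
Lemma ca_0 : ca 0 = 1. Proof. unfold ca; simpl. field. Qed.

Lemma pow_opp_even (y : R) m : (- y) ^ (2 * m) = y ^ (2 * m).
Proof. rewrite !pow_mult. f_equal. ring. Qed.

Lemma ca_odd p : ca (2 * p + 1) = 0.
Proof.
  unfold ca. replace (S (2 * p + 1)) with (2 * S p)%nat by lia.
  rewrite pow_opp_even. unfold Rdiv. ring.
Qed.

Lemma ca_even q : ca (2 * q) = / (2 ^ (2 * q) * INR (fact (2 * q + 1))).
Proof.
  unfold ca. replace (S (2 * q)) with (2 * q + 1)%nat by lia.
  rewrite !pow_add, pow_opp_even, !pow_inv.
  assert (H1 : 2 ^ (2 * q) <> 0) by (apply pow_nonzero; lra).
  assert (H2 : INR (fact (2 * q + 1)) <> 0) by apply INR_fact_neq_0.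
  rewrite !pow_1. field. split; auto.
Qed.

Lemma PS_mult_cb_ca n : PS_mult cb ca n = match n with O => 1 | S _ => 0 end.
Proof.
  unfold PS_mult. destruct n as [|n].
  - simpl. rewrite cb_0, ca_0. ring.
  - rewrite tech5, Nat.sub_diag, ca_0, cb_S. ring.
Qed.

Lemma sum_pair (F : nat -> R) n :
  sum_f_R0 F (2 * n + 1) = sum_f_R0 (fun i => F (2 * i)%nat + F (2 * i + 1)%nat) n.
Proof.
  induction n as [|n IH].
  - simpl. ring.
  - replace (2 * S n + 1)%nat with (S (S (2 * n + 1))) by lia.
    rewrite !tech5, IH.
    replace (S (2 * n + 1)) with (2 * S n)%nat by lia.
    replace (S (2 * S n)) with (2 * S n + 1)%nat by lia. ring.
Qed.

Lemma sum_zero (F : nat -> R) n : (forall i, (i <= n)%nat -> F i = 0) -> sum_f_R0 F n = 0.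
Proof.
  induction n as [|n IH]; intros H; simpl.
  - apply H; lia.
  - rewrite IH by (intros; apply H; lia). rewrite H by lia. ring.
Qed.

Lemma cb_odd m : cb (2 * m + 1) = 0.
Proof.
  induction m as [m IH] using (well_founded_induction Wf_nat.lt_wf).
  replace (2 * m + 1)%nat with (S (2 * m)) by lia. rewrite cb_S.
  rewrite sum_zero; [ring|]. intros j Hj.
  destruct (Nat.Even_or_Odd j) as [[i ->]|[i ->]].
  - replace (S (2 * m) - 2 * i)%nat with (2 * (m - i) + 1)%nat by lia.
    rewrite ca_odd. ring.
  - rewrite IH by lia. ring.
Qed.

Lemma sum_opp (F : nat -> R) n : sum_f_R0 (fun i => - F i) n = - sum_f_R0 F n.
Proof. induction n; simpl; [|rewrite IHn]; ring. Qed.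

Lemma cb_even k : (0 < k)%nat ->
  cb (2 * k) = sum_f_R0 (fun s => - cb (2 * s) /
                   (2 ^ (2 * k - 2 * s) * INR (fact (2 * k - 2 * s + 1)))) (k - 1).
Proof.
  intros Hk. destruct k as [|k]; [lia|].
  replace (2 * S k)%nat with (S (2 * k + 1)) at 1 by lia.
  rewrite cb_S, sum_pair. replace (S k - 1)%nat with k by lia.
  rewrite <- sum_opp. apply sum_eq. intros i Hi.
  replace (S (2 * k + 1) - 2 * i)%nat with (2 * (S k - i))%nat by lia.
  replace (2 * S k - 2 * i)%nat with (2 * (S k - i))%nat by lia.
  rewrite cb_odd, ca_even. unfold Rdiv. ring.
Qed.

Lemma pow_half_le n : 0 <= (/2) ^ n <= 1.
Proof. induction n; simpl; lra. Qed.

Lemma Rabs_ca n : Rabs (ca n) <= 1.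
Proof.
  unfold ca. unfold Rdiv. rewrite Rabs_mult.
  assert (Hf : 1 <= INR (fact (S n))).
  { apply (le_INR 1). pose proof (lt_O_fact (S n)). lia. }
  rewrite Rabs_inv, (Rabs_right (INR _)) by lra.
  assert (Hp : Rabs ((/2) ^ S n - (- /2) ^ S n) <= 1).
  { unfold Rminus. eapply Rle_trans; [apply Rabs_triang|]. rewrite Rabs_Ropp, <- !RPow_abs.
    rewrite Rabs_Ropp, Rabs_right by lra. simpl.
    pose proof (pow_half_le n). lra. }
  assert (0 < / INR (fact (S n)) <= 1).
  { split. apply Rinv_0_lt_compat; lra. rewrite <- Rinv_1. apply Rinv_le_contravar; lra. }
  pose proof (Rabs_pos ((/2) ^ S n - (- /2) ^ S n)). nra.
Qed.

Lemma Rabs_cb n : Rabs (cb n) <= 2 ^ n.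
Proof.
  induction n as [n IH] using (well_founded_induction Wf_nat.lt_wf).
  destruct n as [|n].
  - rewrite cb_0. simpl. rewrite Rabs_R1. lra.
  - rewrite cb_S, Rabs_Ropp. eapply Rle_trans; [apply sum_f_R0_triangle|].
    apply Rle_trans with (sum_f_R0 (fun j => 2 ^ j) n).
    + apply sum_Rle. intros j Hj. rewrite Rabs_mult.
      pose proof (Rabs_ca (S n - j)). pose proof (IH j ltac:(lia)).
      pose proof (Rabs_pos (cb j)). pose proof (Rabs_pos (ca (S n - j))). nra.
    + pose proof (GP_finite 2 n). replace (n + 1)%nat with (S n) in H by lia.
      lra.
Qed.

Lemma radius_of_bound (c : nat -> R) : (forall n, Rabs (c n) <= 2 ^ n) ->
  forall x, Rabs x < /4 -> Rbar_lt (Rabs x) (CV_radius c).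
Proof.
  intros Hc x Hx.
  assert (Hd : CV_disk c (/4)).
  { unfold CV_disk. apply (@ex_series_le R_AbsRing R_CompleteNormedModule _ (fun n => (/2) ^ n)).
    - intros n. change norm with (@abs R_AbsRing). unfold abs; simpl.
      rewrite Rabs_Rabsolu, Rabs_mult, <- RPow_abs, (Rabs_right (/4)) by lra.
      replace (/2) with (2 * /4) by field. rewrite Rpow_mult_distr.
      pose proof (Hc n). assert (0 <= (/4)^n) by (apply pow_le; lra). nra.
    - apply ex_series_geom. rewrite Rabs_right; lra. }
  apply Rbar_lt_le_trans with (Finite (/4)).
  - simpl. exact Hx.
  - destruct (Lub_Rbar_correct (CV_disk c)) as [Hub _]. apply Hub. exact Hd.
Qed.

Lemma Rabs_ca2 n : Rabs (ca n) <= 2 ^ n.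
Proof. eapply Rle_trans; [apply Rabs_ca|]. apply pow_R1_Rle. lra. Qed.

Lemma pow_n_abs (x : R) k : @pow_n (AbsRing.Ring R_AbsRing) x k = x ^ k.
Proof. exact (pow_n_pow x k). Qed.

Definition cd (n : nat) : R := ((/2) ^ n - (- /2) ^ n) / INR (fact n).

Lemma is_pseries_cd x : is_pseries cd x (exp (x/2) - exp (- x / 2)).
Proof.
  pose proof (is_exp_Reals (x/2)) as H1. pose proof (is_exp_Reals (- x / 2)) as H2.
  unfold is_pseries in *.
  pose proof (is_series_minus _ _ _ _ H1 H2) as H3.
  eapply is_series_ext; [|exact H3].
  intros n. unfold minus, plus, opp, scal; simpl.
  unfold mult; simpl.
  assert (E1 : pow_n x n = x ^ n) by apply pow_n_pow. rewrite E1, !pow_n_pow.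
  replace (x / 2) with (x * /2) by field. replace (- x / 2) with (x * - /2) by field.
  rewrite !Rpow_mult_distr. unfold cd. unfold Rdiv. ring.
Qed.

Lemma PSeries_ca_mul x : x * PSeries ca x = exp (x/2) - exp (- x / 2).
Proof.
  rewrite <- PSeries_incr_1. rewrite <- (is_pseries_unique _ _ _ (is_pseries_cd x)).
  apply PSeries_ext. intros [|n]; simpl.
  - unfold cd; simpl. unfold zero; simpl. field.
  - reflexivity.
Qed.

Lemma PSeries_ca_0 : PSeries ca 0 = 1.
Proof. rewrite PSeries_0. apply ca_0. Qed.

Lemma PSeries_prod_1 x : Rabs x < /4 -> PSeries cb x * PSeries ca x = 1.
Proof.
  intros Hx.
  pose proof (radius_of_bound cb Rabs_cb x Hx) as Rb.
  pose proof (radius_of_bound ca Rabs_ca2 x Hx) as Ra.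
  rewrite <- (PSeries_mult _ _ _ Rb Ra).
  rewrite PSeries_decr_1 by (apply ex_pseries_mult; assumption).
  rewrite (PSeries_ext (PS_decr_1 (PS_mult cb ca)) (fun _ => 0)).
  - rewrite PSeries_const_0, PS_mult_cb_ca. ring.
  - intros n. unfold PS_decr_1. rewrite PS_mult_cb_ca. reflexivity.
Qed.

Lemma sinh_half_neq0 x : x <> 0 -> sinh (x / 2) <> 0.
Proof.
  intros Hx. rewrite <- sinh_0. intros E.
  destruct (Rlt_or_le x 0) as [H|H].
  - assert (sinh (x/2) < sinh 0) by (apply sinh_lt; lra). lra.
  - assert (sinh 0 < sinh (x/2)) by (apply sinh_lt; lra). lra.
Qed.

Lemma g_series x : Rabs x < /4 -> g_tau x = PSeries cb x.
Proof.
  intros Hx. unfold g_tau. destruct (Req_EM_T x 0) as [->|Hne].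
  - rewrite PSeries_0. reflexivity.
  - pose proof (PSeries_prod_1 x Hx) as H1. pose proof (PSeries_ca_mul x) as H2.
    pose proof (sinh_half_neq0 x Hne) as Hs.
    assert (Hsh : exp (x/2) - exp (- x / 2) = 2 * sinh (x / 2)).
    { unfold sinh. replace (- (x/2)) with (- x / 2) by field. field. }
    rewrite Hsh in H2.
    assert (Hca : PSeries ca x = 2 * sinh (x/2) / x) by (rewrite <- H2; field; auto).
    rewrite Hca in H1. 
    apply (Rmult_eq_reg_r (2 * sinh (x / 2) / x)).
    + rewrite H1. field. auto.
    + unfold Rdiv. apply Rmult_integral_contrapositive_currified.
      apply Rmult_integral_contrapositive_currified; lra || auto. apply Rinv_neq_0_compat; auto.
Qed.

Lemma g_loc : locally 0 (fun t : R_UniformSpace => PSeries cb t = g_tau t).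
Proof.
  assert (H : 0 < /4) by lra.
  exists (mkposreal _ H). intros y Hy. symmetry. apply g_series.
  change (Rabs (y - 0) < /4) in Hy. rewrite Rminus_0_r in Hy. exact Hy.
Qed.

Lemma cb_rad0 : Rbar_lt 0 (CV_radius cb).
Proof.
  pose proof (radius_of_bound cb Rabs_cb 0 ltac:(rewrite Rabs_R0; lra)).
  rewrite Rabs_R0 in H. exact H.
Qed.

Lemma tau_cb n : tau n = cb n.
Proof.
  unfold tau. rewrite <- (Derive_n_ext_loc _ _ n 0 g_loc).
  rewrite Derive_n_coef by apply cb_rad0. field. apply INR_fact_neq_0.
Qed.

Lemma ex_g n : ex_derive_n g_tau n 0.
Proof.
  apply (ex_derive_n_ext_loc _ _ n 0 g_loc). apply ex_derive_n_PSeries.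
  rewrite Rabs_R0. apply cb_rad0.
Qed.

Lemma recon dx (Hdx : 0 < dx) x :
  ex_RInt (h_exp dx) (x - dx / 2) (x + dx / 2) /\
  exp x = / dx * RInt (h_exp dx) (x - dx / 2) (x + dx / 2).
Proof.
  assert (HI : is_RInt (h_exp dx) (x - dx / 2) (x + dx / 2)
                 (minus (h_exp dx (x + dx/2)) (h_exp dx (x - dx/2)))).
  { apply (is_RInt_derive (h_exp dx) (h_exp dx)).
    - intros t _. unfold h_exp. apply is_derive_scal. apply is_derive_exp.
    - intros t _. apply (@ex_derive_continuous R_AbsRing R_NormedModule). exists (h_exp dx t).
      unfold h_exp. apply is_derive_scal. apply is_derive_exp. }
  split. { eexists; exact HI. }
  rewrite (is_RInt_unique _ _ _ _ HI). unfold minus, plus, opp; simpl.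
  unfold h_exp, g_tau. destruct (Req_EM_T dx 0) as [E|Hne]; [lra|].
  pose proof (sinh_half_neq0 dx Hne) as Hs.
  rewrite !exp_plus. replace (x - dx/2) with (x + - (dx/2)) by ring. rewrite exp_plus.
  unfold sinh in *. 
  assert (Hd : exp (dx/2) - exp (- (dx/2)) <> 0) by (intro E'; apply Hs; rewrite E'; field).
  field. split; auto.
Qed.

Theorem theorem1 (dx : R) (Hdx : 0 < dx) :
  (forall x : R,
     ex_RInt (h_exp dx) (x - dx / 2) (x + dx / 2) /\
     exp x = / dx * RInt (h_exp dx) (x - dx / 2) (x + dx / 2)) /\
  (forall n : nat, ex_derive_n g_tau n 0) /\
  (forall n : nat, tau (2 * n + 1) = 0) /\
  tau 0 = 1 /\
  (forall k : nat, (0 < k)%nat ->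
     tau (2 * k) =
       sum_f_R0 (fun s => - tau (2 * s) /
                   (2 ^ (2 * k - 2 * s) * INR (fact (2 * k - 2 * s + 1))))
                (k - 1)).
Proof.
  split; [exact (recon dx Hdx)|].
  split; [exact ex_g|].
  split; [intros n; rewrite tau_cb; apply cb_odd|].
  split; [rewrite tau_cb; apply cb_0|].
  intros k Hk. rewrite tau_cb, cb_even by exact Hk.
  apply sum_eq. intros i _. rewrite tau_cb. reflexivity.
Qed.
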